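(* Let $Y,Z$ be finite-dimensional real or complex vector spaces, let $F\colon Y\to Z$ be quadratic, let $\mathcal A\subset L(Y,Y)$ be a Jordan operator algebra on $Y$, let $\alpha\colon Z\to\mathcal A$, and let $\beta\colon\mathcal A\to L(Z,Z)$ satisfy $F'(y)Ty=\beta(T)F(y)$ for all $y\in Y$, $T\in\mathcal A$. Let nonzero $b_1,\dots,b_s$ and $h>0$ be given and suppose $y_0,y_1,Y_1,\dots,Y_s\in Y$ satisfy the SyDIRK equations for $f(y)=\alpha(F(y))y$: \[ Y_i = y_0 + h\sum_{j=1}^{i-1} b_j f(Y_j) + \frac h2 b_i f(Y_i),\qquad y_1 = y_0 + h\sum_{i=1}^s b_i f(Y_i). \] Then $z_0=F(y_0)$, $Z_i=F(Y_i)$, $z_1=F(y_1)$ satisfy \[ Z_i = z_0 + h\sum_{j=1}^{i-1} b_j\beta(\alpha(Z_j))Z_j + \frac h2 b_i\beta(\alpha(Z_i))Z_i - \frac{h^2}{8}b_i^2\bigl[\beta(\alpha(Z_i))^2-\beta(\alpha(Z_i)^2)\bigr]Z_i, \] \[ z_1 = z_0 + h\sum_{i=1}^s b_i\beta(\alpha(Z_i))Z_i . \]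
   Context: $F$ quadratic means that for every $y_0$, $F(y)=F(y_0)+F'(y_0)(y-y_0)+\tfrac12F''(y-y_0,y-y_0)$ with $F''$ a constant symmetric bilinear map. A Jordan operator algebra on $Y$ is a linear subspace of $L(Y,Y)$ closed under $S\bullet T=\tfrac12(ST+TS)$. *)

(* Defs.v *)
From HB Require Import structures.
From mathcomp Require Import all_boot all_order all_algebra.
Set Implicit Arguments. Unset Strict Implicit. Unset Printing Implicit Defensive.
Import Order.TTheory GRing.Theory Num.Theory.
Local Open Scope ring_scope.

(* Scalars: K : numFieldType (covers both the reals and the complex numbers).
   Finite-dimensional vector spaces: vectType K.  L(Y,Z) := 'Hom(Y,Z). *)

Definition symmetric_bilinear (K : numFieldType) (Y Z : vectType K)
    (B : Y -> Y -> Z) : Prop :=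
  (forall u v, B u v = B v u) /\
  (forall (a : K) u v w, B (a *: u + v) w = a *: B u w + B v w).

Definition quadratic (K : numFieldType) (Y Z : vectType K)
    (F : Y -> Z) (F' : Y -> 'Hom(Y, Z)) (F'' : Y -> Y -> Z) : Prop :=
  symmetric_bilinear F'' /\
  forall y0 y, F y = F y0 + F' y0 (y - y0) + 2%:R^-1 *: F'' (y - y0) (y - y0).

Definition jordan_prod (K : numFieldType) (Y : vectType K)
    (S T : 'End(Y)) : 'End(Y) :=
  2%:R^-1 *: ((S \o T)%VF + (T \o S)%VF).

Definition jordan_operator_algebra (K : numFieldType) (Y : vectType K)
    (A : {vspace 'End(Y)}) : Prop :=
  forall S T, S \in A -> T \in A -> jordan_prod S T \in A.

(* Main.v *)
Require Import Defs.
From HB Require Import structures.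
From mathcomp Require Import all_boot all_order all_algebra.
From mathcomp Require Import ring.
Import Order.TTheory GRing.Theory Num.Theory.
Local Open Scope ring_scope.
Set Implicit Arguments. Unset Strict Implicit.
Lemma two_neq0 (K : numFieldType) : (2%:R : K) != 0.
Proof. by rewrite pnatr_eq0. Qed.
Lemma half_half (K : numFieldType) : (2%:R^-1 + 2%:R^-1 : K) = 1.
Proof. by rewrite -mulr2n -[_ *+ 2]mulr_natr mulVf // two_neq0. Qed.
Lemma lfD (K : numFieldType) (U V : vectType K) (f : 'Hom(U, V)) a b : f (a + b) = f a + f b.
Proof. exact: linearD. Qed.
Lemma lfN (K : numFieldType) (U V : vectType K) (f : 'Hom(U, V)) a : f (- a) = - f a.
Proof. exact: linearN. Qed.
Lemma lfZ (K : numFieldType) (U V : vectType K) (f : 'Hom(U, V)) (k : K) a : f (k *: a) = k *: f a.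
Proof. exact: linearZ. Qed.
Lemma ab1 (V : zmodType) (a b c d : V) : a + c + (b + d) = a - c + (-b + d) + (b + b + (c + c)).
Proof.
by rewrite -[RHS]addrA [- b + d + _]addrACA addKr (addrC d) [b + (_ + _)]addrCA addrA -[a - c + _]addrA addKr.
Qed.
Lemma jordan_sq (K : numFieldType) (Y : vectType K) (S : 'End(Y)) :
  jordan_prod S S = (S \o S)%VF.
Proof. by rewrite /jordan_prod -mulr2n -scaler_nat scalerA mulVf ?two_neq0 // scale1r. Qed.
Section S.
Variables (K : numFieldType) (Y Z : vectType K)
    (F : Y -> Z) (F' : Y -> 'Hom(Y, Z)) (B : Y -> Y -> Z).
Hypothesis HF : quadratic F F' B.

Lemma B0l w : B 0 w = 0.
Proof.
case: HF => [[_ H] _]; have := H 1 0 0 w; rewrite !scale1r addr0.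
by move=> e; apply: (addrI (B 0 w)); rewrite addr0 -e.
Qed.
Lemma BDl u v w : B (u + v) w = B u w + B v w.
Proof. case: HF => [[_ H] _]. have := H 1 u v w. by rewrite !scale1r. Qed.
Lemma BZl a u w : B (a *: u) w = a *: B u w.
Proof. by case: HF => [[_ H] _]; rewrite -[a *: u]addr0 H B0l addr0. Qed.
Lemma BNl u w : B (- u) w = - B u w.
Proof. by rewrite -scaleN1r BZl scaleN1r. Qed.
Lemma Bsym u w : B u w = B w u.
Proof. by case: HF => [[H _] _]. Qed.
Lemma BDr u v w : B w (u + v) = B w u + B w v.
Proof. by rewrite Bsym BDl !(Bsym _ w). Qed.
Lemma BZr a u w : B w (a *: u) = a *: B w u.
Proof. by rewrite Bsym BZl Bsym. Qed.
Lemma BNr u w : B w (- u) = - B w u.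
Proof. by rewrite Bsym BNl Bsym. Qed.

Lemma Fexp y d : F (y + d) = F y + F' y d + 2%:R^-1 *: B d d.
Proof. by case: HF => _ H; rewrite (H y) (addrC y d) addrK. Qed.

Lemma Fdiff y d : F (y + d) = F (y - d) + 2%:R *: F' y d.
Proof.
rewrite !Fexp BNl BNr opprK linearN scaler_nat mulr2n.
set a := F y; set b := F' y d; set c := _ *: B d d.
by rewrite [RHS]addrAC -[a - b + _]addrA addKr.
Qed.

Lemma F'shift y e d : F' (y + e) d = F' y d + B e d.
Proof.
have := Fexp y (e + d); rewrite addrA Fexp Fexp BDl !BDr (Bsym d e) linearD !scalerDr.
rewrite -!addrA => /addrI/addrI.
rewrite [RHS]addrCA => /addrI.
rewrite !addrA => /addIr ->.
by rewrite -addrA -scalerDl half_half scale1r.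
Qed.


Lemma betaF' (bT : 'End(Z)) (T : 'End(Y)) (Hb : forall x, bT (F x) = F' x (T x)) y u :
  bT (F' y u) = F' y (T u) + B u (T y).
Proof.
have := Hb (y + u); rewrite Fdiff lfD lfZ Hb => h1.
apply: (scalerI (two_neq0 K)); apply: (addrI (F' (y - u) (T (y - u)))); rewrite h1.
rewrite !lfD !lfN !F'shift.
rewrite scalerDr !scaler_nat !mulr2n.
by rewrite !BNl opprD opprK; apply: ab1.
Qed.

Lemma keyB (bT bTT : 'End(Z)) (T : 'End(Y)) (Hb : forall x, bT (F x) = F' x (T x))
  (Hb2 : forall x, bTT (F x) = F' x ((T \o T)%VF x)) y :
  B (T y) (T y) = bT (bT (F y)) - bTT (F y).
Proof. by rewrite Hb (@betaF' bT T Hb) Hb2 comp_lfunE addrC addKr. Qed.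
End S.

Lemma sum_split (V : zmodType) s (g : 'I_s -> V) (i : 'I_s) :
  \sum_(j < s | (j < i.+1)%N) g j = \sum_(j < s | (j < i)%N) g j + g i.
Proof.
rewrite (bigD1 i) //= addrC; congr (_ + _); apply: eq_bigl => j.
by rewrite ltnS ltn_neqAle andbC.
Qed.


Unset Implicit Arguments.
Set Strict Implicit.
Theorem corollary3p3 (K : numFieldType) (Y Z : vectType K)
    (F : Y -> Z) (F' : Y -> 'Hom(Y, Z)) (F'' : Y -> Y -> Z)
    (A : {vspace 'End(Y)})
    (alpha : Z -> 'End(Y)) (beta : 'End(Y) -> 'End(Z))
    (s : nat) (b : 'I_s -> K) (h : K)
    (y0 y1 : Y) (Ys : 'I_s -> Y) :
  quadratic F F' F'' ->
  jordan_operator_algebra A ->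
  (forall z, alpha z \in A) ->
  (forall y T, T \in A -> F' y (T y) = beta T (F y)) ->
  (forall i, b i != 0) ->
  0 < h ->
  let f := fun y : Y => alpha (F y) y in
  (forall i : 'I_s,
     Ys i = y0 + h *: \sum_(j < s | (j < i)%N) b j *: f (Ys j)
              + (h / 2%:R * b i) *: f (Ys i)) ->
  y1 = y0 + h *: \sum_(i < s) b i *: f (Ys i) ->
  let z0 := F y0 in
  let Zs := fun i => F (Ys i) in
  let z1 := F y1 in
  (forall i : 'I_s,
     Zs i = z0 + h *: \sum_(j < s | (j < i)%N) b j *: beta (alpha (Zs j)) (Zs j)
              + (h / 2%:R * b i) *: beta (alpha (Zs i)) (Zs i)
              - (h ^+ 2 / 8%:R * b i ^+ 2) *:
                  ((beta (alpha (Zs i)) \o beta (alpha (Zs i)))%VF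
                   - beta (alpha (Zs i) \o alpha (Zs i))%VF) (Zs i))
  /\ z1 = z0 + h *: \sum_(i < s) b i *: beta (alpha (Zs i)) (Zs i).

Proof.
move=> HF HJ Hal Hbeta _ _ f HYs Hy1 z0 Zs z1.
set T := fun i => alpha (Zs i).
have HbT : forall (i : 'I_s) x, beta (T i) (F x) = F' x (T i x).
  by move=> i x; rewrite Hbeta //; exact: Hal.
have HbTT : forall (i : 'I_s) x, beta (T i \o T i)%VF (F x) = F' x ((T i \o T i)%VF x).
  move=> i x; rewrite Hbeta //.
  have := HJ _ _ (Hal (Zs i)) (Hal (Zs i)).
  by rewrite jordan_sq.
set W := fun k : nat => y0 + h *: \sum_(j < s | (j < k)%N) b j *: f (Ys j).
set c := fun i : 'I_s => h / 2%:R * b i.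
have hfi : forall i, f (Ys i) = T i (Ys i) by [].
have HYW : forall i : 'I_s, Ys i = W i + c i *: f (Ys i) by move=> i; rewrite {1}HYs.
have HWS : forall i : 'I_s, W i.+1 = Ys i + c i *: f (Ys i).
  move=> i; rewrite {1}HYW /W sum_split scalerDr scalerA -!addrA; congr (_ + (_ + _)).
  by rewrite -scalerDl; congr (_ *: _); rewrite /c; field.
have HFW : forall i : 'I_s, F (W i.+1) = F (W i) + (h * b i) *: beta (T i) (Zs i).
  move=> i; rewrite HWS (Fdiff HF).
  have -> : Ys i - c i *: f (Ys i) = W i by rewrite {1}HYW addrK.
  congr (_ + _); rewrite lfZ hfi -HbT scalerA; congr (_ *: _); by rewrite /c; field.
set G := fun k : nat => z0 + h *: \sum_(j < s | (j < k)%N) b j *: beta (T j) (Zs j).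
have HFG : forall k, (k <= s)%N -> F (W k) = G k.
  elim=> [_|k IH Hk].
    by rewrite /W /G !big_pred0 // scaler0 addr0 scaler0 addr0.
  pose i := Ordinal Hk.
  have := HFW i; change (nat_of_ord i) with k => ->; rewrite IH; last exact: ltnW.
  by rewrite /G; change k with (nat_of_ord i); rewrite sum_split scalerDr scalerA addrA.
split.
- move=> i.
  have HFi := HFG i (ltnW (ltn_ord i)); rewrite /G in HFi; rewrite -HFi.
  have E := Fexp HF (Ys i) (- (c i *: f (Ys i))).
  have EW : Ys i - c i *: f (Ys i) = W i by rewrite {1}HYW addrK.
  rewrite EW (BNl HF) (BNr HF) opprK lfN in E.
  rewrite E lfZ hfi -HbT (BZl HF) (BZr HF) !scalerA (keyB HF (HbT i) (HbTT i)).
  rewrite add_lfunE opp_lfunE comp_lfunE.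
  have -> : 2%:R^-1 * (c i * c i) = h ^+ 2 / 8%:R * b i ^+ 2.
    by rewrite /c; field.
  by rewrite (addrAC _ (_ *: (_ - _))) subrK addrK.
- have E1 : forall (V : zmodType) (g : 'I_s -> V),
     \sum_(j < s) g j = \sum_(j < s | (j < s)%N) g j.
    by move=> V g; apply: eq_bigl => j; rewrite ltn_ord.
  by rewrite /z1 Hy1 E1 (HFG s (leqnn s)) /G E1.
Qed.
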